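(* Let $n\ge2$, $p\in S_k$, and $\pi:\{1,\dots,k\}\to\{1,\dots,n\}$. Suppose there exist $i<j$ with $p_i>p_j$ and $\pi(i)\le\pi(j)$. Then no $w\in\widetilde{S}_n$ contains an instance of $p$ with strand assignment $\pi$.
   Context: An affine permutation of size $n$ is a bijection $w:\mathbb{Z}\to\mathbb{Z}$ with $w(i+n)=w(i)+n$ for all $i$ and $w(1)+\cdots+w(n)=\binom{n+1}{2}$; $\widetilde{S}_n$ is the group of these. For $p\in S_k$, an instance of $p$ in $w$ is a sequence of integers $i_1<\cdots<i_k$ such that $w(i_1),\dots,w(i_k)$ are in the same relative order as $p_1,\dots,p_k$; $w$ contains $p$ if such an instance exists. The strand assignment of an instance is the function $\pi:\{1,\dots,k\}\to\{1,\dots,n\}$ with $\pi(m)=j$ iff $i_m\equiv q\pmod n$, where $q\in\{1,\dots,n\}$ is the position such that $w(q)$ is the $j$-th smallest of $w(1),\dots,w(n)$. *)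

(* Defs.v *)
From HB Require Import structures.
From mathcomp Require Import all_boot all_order all_algebra all_fingroup.
Set Implicit Arguments. Unset Strict Implicit. Unset Printing Implicit Defensive.
Import Order.TTheory GRing.Theory Num.Theory.
Local Open Scope ring_scope.

Definition affine_perm (n : nat) (w : int -> int) : Prop :=
  bijective w /\
  (forall i : int, w (i + n%:Z) = w i + n%:Z) /\
  \sum_(1 <= i < n.+1) w (Posz i) = ('C(n.+1, 2))%:Z.

(* An instance of p (p : 'S_k, positions 0..k-1 standing for 1..k) in w:
   strictly increasing positions whose images are in the same relative
   order as p. *)
Definition is_instance (k : nat) (w : int -> int) (p : 'S_k) (pos : 'I_k -> int) : Prop :=
  (forall a b : 'I_k, (a < b)%N -> pos a < pos b) /\
  (forall a b : 'I_k, (w (pos a) < w (pos b)) = (p a < p b)%N).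

Definition window_rep (n : nat) (x : int) : int := ((x - 1) %% n%:Z)%Z + 1.

(* j such that w(q) is the j-th smallest of w(1),...,w(n) (1-based). *)
Definition window_rank (n : nat) (w : int -> int) (q : int) : nat :=
  #|[set r : 'I_n | w (Posz r.+1) <= w q]|.

Definition strand_assignment (n k : nat) (w : int -> int) (pos : 'I_k -> int) : 'I_k -> nat :=
  fun m => window_rank n w (window_rep n (pos m)).

(* Main.v *)
Require Import Defs.
From HB Require Import structures.
From mathcomp Require Import all_boot all_order all_algebra all_fingroup.
From mathcomp Require Import zify ring lra.
Import Order.TTheory GRing.Theory Num.Theory.
Local Open Scope ring_scope.

Lemma per_nat (n : nat) (w : int -> int) :
  (forall i : int, w (i + n%:Z) = w i + n%:Z) ->
  forall (m : nat) x, w (x + m%:Z * n%:Z) = w x + m%:Z * n%:Z.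
Proof.
move=> H; elim=> [|m IH] x; first by rewrite !mul0r !addr0.
have -> : x + m.+1%:Z * n%:Z = (x + m%:Z * n%:Z) + n%:Z by rewrite -addn1 PoszD; ring.
rewrite H IH -addn1 PoszD; ring.
Qed.

Lemma per_int (n : nat) (w : int -> int) :
  (forall i : int, w (i + n%:Z) = w i + n%:Z) ->
  forall (a : int) x, w (x + a * n%:Z) = w x + a * n%:Z.
Proof.
move=> H [m|m] x; first exact: (@per_nat n w H).
have := @per_nat n w H m.+1 (x + Negz m * n%:Z).
have -> : x + Negz m * n%:Z + m.+1%:Z * n%:Z = x by rewrite NegzE; ring.
move=> ->; rewrite NegzE; ring.
Qed.

Lemma rep_dec (n : nat) (x : int) : (0 < n)%N ->
  [/\ 1 <= window_rep n x, window_rep n x <= n%:Z &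
      x = window_rep n x + ((x - 1) %/ n%:Z)%Z * n%:Z].
Proof.
move=> n0; rewrite /window_rep.
have nz : n%:Z != 0 by rewrite eqz_nat -lt0n.
have h1 := modz_ge0 (x - 1) nz.
have h2 := ltz_pmod (x - 1) (n0 : (0 < n%:Z)).
have h3 := divz_eq (x - 1) n%:Z.
split; [lia|lia|lia].
Qed.

Lemma rank_mono (n : nat) (w : int -> int) (q1 q2 : int) :
  1 <= q1 -> q1 <= n%:Z -> w q2 < w q1 ->
  (window_rank n w q2 < window_rank n w q1)%N.
Proof.
move=> h1 h2 hw; rewrite /window_rank.
have hr : (`|q1 - 1|%N < n)%N by lia.
apply: proper_card; apply/properP; split.
  apply/subsetP=> r; rewrite !inE => h; exact: le_trans h (ltW hw).
exists (Ordinal hr); rewrite !inE /=.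
  have -> : Posz `|q1 - 1|%N .+1 = q1 by lia.
  by [].
have -> : Posz `|q1 - 1|%N .+1 = q1 by lia.
by rewrite -ltNge.
Qed.

Theorem mainTheorem5 (n k : nat) (p : 'S_k) (pi : 'I_k -> nat) :
  (2 <= n)%N ->
  (forall m : 'I_k, (1 <= pi m <= n)%N) ->
  (exists i j : 'I_k, [/\ (i < j)%N, (p j < p i)%N & (pi i <= pi j)%N]) ->
  ~ (exists (w : int -> int) (pos : 'I_k -> int),
        [/\ affine_perm n w, is_instance w p pos &
            forall m : 'I_k, strand_assignment n w pos m = pi m]).
Proof.
move=> n2 _ [i [j [lij pji piij]]] [w [pos [[_ [hper _]] [hinc hord] hs]]].
have n0 : (0 < n)%N by lia.
have lpos := hinc _ _ lij.
have hw : w (pos j) < w (pos i) by rewrite hord.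
have [a1 a2 a3] := @rep_dec n (pos i) n0.
have [b1 b2 b3] := @rep_dec n (pos j) n0.
set ri := window_rep n (pos i) in a1 a2 a3.
set rj := window_rep n (pos j) in b1 b2 b3.
set a := ((pos i - 1) %/ n%:Z)%Z in a3.
set b := ((pos j - 1) %/ n%:Z)%Z in b3.
have hab : a <= b.
  rewrite leNgt; apply/negP=> hba.
  have : (b + 1) * n%:Z <= a * n%:Z by rewrite ler_pM2r; [lia|lia].
  lia.
have ew := @per_int n w hper.
rewrite a3 b3 !ew in hw.
have : w rj < w ri.
  have : a * n%:Z <= b * n%:Z by rewrite ler_pM2r; lia.
  lra.
move/(@rank_mono n w ri rj a1 a2).
have := hs i; have := hs j; rewrite /strand_assignment -/ri -/rj => -> ->.
lia.
Qed.
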